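(* Let $n,n'\in\mathbb{N}$, $\mathbb{K}$ a field, $R=\mathbb{K}[X_1,\ldots,X_n]$, $R'=\mathbb{K}[X_1,\ldots,X_{n'}]$, and let $J'\subsetneq I'\subset R'$ be monomial ideals. Let $\phi:\mathbb{N}^n\to\mathbb{N}^{n'}$ be a monotonic map, let $\Phi:R\to R'$ be the $\mathbb{K}$-linear map with $\Phi(X^a)=X^{\phi(a)}$ on monomials, and set $I:=\Phi^{-1}(I')$, $J:=\Phi^{-1}(J')$. Choose $g\in\mathbb{N}^n$ and $g'\in\mathbb{N}^{n'}$ such that every minimal generator of $I$ and $J$ divides $X^g$ and every minimal generator of $I'$ and $J'$ divides $X^{g'}$. Let $\ell\in\mathbb{Z}$ and assume $\phi$ changes the Stanley depth by $\ell$ with respect to $g$ and $g'$. Then (i) $I$ and $J$ are monomial ideals, and (ii) $\operatorname{sdepth} I/J \ge \operatorname{sdepth} I'/J' + \ell$.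
   Context: $\mathbb{N}^n$ carries the componentwise partial order; $[a,b]=\{c: a\le c\le b\}$; a map is monotonic if it preserves this order. A monotonic map $\phi:\mathbb{N}^n\to\mathbb{N}^{n'}$ changes the Stanley depth by $\ell\in\mathbb{Z}$ with respect to $g\in\mathbb{N}^n$ and $g'\in\mathbb{N}^{n'}$ if (1) $\phi(g)\le g'$, and (2) for every interval $[a',b']\subset[0,g']$, the set $\phi^{-1}([a',b'])\cap[0,g]$ is a finite disjoint union $\bigcup_i[a^i,b^i]$ of intervals with $\#\{j\in[n]: b^i_j=g_j\}\ge\#\{j\in[n']: b'_j=g'_j\}+\ell$ for all $i$. Stanley depth: with the fine multigrading, a Stanley decomposition of a finitely generated multigraded module $M$ is a finite family $(\mathbb{K}[Z_k], m_k)$ with $m_k$ homogeneous, $Z_k$ subsets of the variables, $m_k\mathbb{K}[Z_k]$ free over $\mathbb{K}[Z_k]$, and $M=\bigoplus_k m_k\mathbb{K}[Z_k]$ as multigraded $\mathbb{K}$-vector spaces; its depth is $\min_k|Z_k|$, and $\operatorname{sdepth}M$ is the maximal depth of a Stanley decomposition. *)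

(* Defs.v *)
(* Monomial ideals of K[X_1..X_n] are represented by their
   sets of exponent vectors (upward-closed subsets of N^n). *)
From mathcomp Require Import all_boot all_order all_algebra.
Set Implicit Arguments. Unset Strict Implicit. Unset Printing Implicit Defensive.
Import Order.TTheory GRing.Theory Num.Theory.

Definition vec (n : nat) := {ffun 'I_n -> nat}.

Definition vle n (a b : vec n) : Prop := forall i, (a i <= b i)%N.

Definition in_interval n (a b c : vec n) : Prop := vle a c /\ vle c b.

Definition monotonic n n' (phi : vec n -> vec n') : Prop :=
  forall a b, vle a b -> vle (phi a) (phi b).

Definition monomial_ideal n (I : vec n -> Prop) : Prop :=
  forall a b, I a -> vle a b -> I b.

Definition min_gen n (I : vec n -> Prop) (a : vec n) : Prop :=
  I a /\ forall b, I b -> vle b a -> b = a.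

(* the monomial ideal I := Phi^{-1}(I'), X^a in I iff X^{phi a} in I' *)
Definition preimage_ideal n n' (phi : vec n -> vec n') (I' : vec n' -> Prop)
  : vec n -> Prop := fun a => I' (phi a).

Definition nb_eq n (b g : vec n) : nat := #|[set j : 'I_n | b j == g j]|.

Definition changes_sdepth n n' (phi : vec n -> vec n') (l : int)
  (g : vec n) (g' : vec n') : Prop :=
  vle (phi g) g' /\
  forall a' b' : vec n',
    (forall c, in_interval a' b' c -> vle c g') ->
    exists (k : nat) (A B : 'I_k -> vec n),
      (forall i, vle (A i) (B i)) /\
      (forall i j c, in_interval (A i) (B i) c -> in_interval (A j) (B j) c -> i = j) /\
      (forall c, (in_interval a' b' (phi c) /\ vle c g) <->
                 exists i, in_interval (A i) (B i) c) /\
      (forall i, ((nb_eq (B i) g)%:Z >= (nb_eq b' g')%:Z + l)%R).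

(* the monomials of m K[Z], m a monomial, Z a set of variables *)
Definition in_cone n (m : vec n) (Z : {set 'I_n}) (c : vec n) : Prop :=
  vle m c /\ forall i, i \notin Z -> c i = m i.

(* (m_t K[Z_t])_{t<k} is a Stanley decomposition of I/J (fine multigrading):
   each m_t K[Z_t] is a free K[Z_t]-submodule of I/J (all its monomials lie
   in I \ J), and I/J is the direct sum of them (every monomial of I \ J lies
   in exactly one of them). *)
Definition stanley_decomp n (I J : vec n -> Prop) (k : nat)
  (m : 'I_k -> vec n) (Z : 'I_k -> {set 'I_n}) : Prop :=
  (forall t c, in_cone (m t) (Z t) c -> I c /\ ~ J c) /\
  (forall c, I c -> ~ J c -> exists! t, in_cone (m t) (Z t) c).

(* I/J has a Stanley decomposition of depth >= d, i.e. sdepth I/J >= d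
   (with the convention sdepth 0 = +oo) *)
Definition sdepth_ge n (I J : vec n -> Prop) (d : int) : Prop :=
  exists (k : nat) (m : 'I_k -> vec n) (Z : 'I_k -> {set 'I_n}),
    stanley_decomp I J m Z /\ forall t, (d <= (#|Z t|)%:Z)%R.

(* Main.v *)
Require Import Defs.
From mathcomp Require Import all_boot all_order all_algebra.
From mathcomp Require Import zify.
From Stdlib Require Import Classical ClassicalEpsilon.
Import Order.TTheory GRing.Theory Num.Theory.
Set Implicit Arguments. Unset Strict Implicit. Unset Printing Implicit Defensive.

Definition vsum n (c : vec n) : nat := \sum_(j < n) c j.

Lemma vle_refl n (a : vec n) : vle a a.
Proof. by move=> i. Qed.

Lemma vle_trans n (a b c : vec n) : vle a b -> vle b c -> vle a c.
Proof. move=> h1 h2 i; exact: leq_trans (h1 i) (h2 i). Qed.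

Lemma vsum_lt n (a c : vec n) : vle a c -> ~ (a = c) -> vsum a < vsum c.
Proof.
move=> h ne.
have [j hj] : exists j, a j != c j.
  apply: NNPP => H; apply: ne; apply/ffunP => j; apply/eqP; apply: NNPP => H2.
  by apply: H; exists j; apply/negP.
have ltj : a j < c j by rewrite ltn_neqAle hj h.
rewrite /vsum (bigD1 j) //= [X in _ < X](bigD1 j) //=.
rewrite -addSn; apply: leq_add => //; apply: leq_sum => i _; exact: h.
Qed.

Lemma gen_below n (I : vec n -> Prop) c : I c -> exists a, min_gen I a /\ vle a c.
Proof.
move: c.
suff H : forall N c, vsum c < N -> I c -> exists a, min_gen I a /\ vle a c.
  move=> c; exact: (H (vsum c).+1 c (ltnSn _)).
elim=> [c|N IH c hc Ic]; first by rewrite ltn0.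
case: (classic (forall b, I b -> vle b c -> b = c)) => [Hm|Hm].
  exists c; split; last exact: vle_refl. by split.
move: Hm => /not_all_ex_not [b Hb]. have [Ib Hb2] := imply_to_and _ _ Hb. have [hb nb] := imply_to_and _ _ Hb2.
have hc' : vsum c <= N by [].
have [a [ma hab]] := IH b (leq_trans (vsum_lt hb nb) hc') Ib.
exists a; split => //; exact: vle_trans hab hb.
Qed.

Definition pi n (g c : vec n) : vec n := [ffun j => minn (c j) (g j)].

Lemma pi_iff n (I : vec n -> Prop) g : monomial_ideal I ->
  (forall x, min_gen I x -> vle x g) -> forall c, I c <-> I (pi g c).
Proof.
move=> mI hg c; split => Ic.
  have [a [ma hac]] := gen_below Ic.
  apply: (mI a) => [|j]; first by case: ma.
  rewrite ffunE leq_min; apply/andP; split; [exact: hac|exact: hg _ ma j].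
by apply: (mI _ _ Ic) => j; rewrite ffunE geq_minl.
Qed.

Definition Sset n (I J : vec n -> Prop) (g x : vec n) := vle x g /\ I x /\ ~ J x.

Lemma sdepth_from_intervals n (I J : vec n -> Prop) (g : vec n) (d : int)
  (a b : vec n -> vec n) :
  monomial_ideal I -> monomial_ideal J ->
  (forall x, min_gen I x -> vle x g) -> (forall x, min_gen J x -> vle x g) ->
  (forall x, Sset I J g x -> in_interval (a x) (b x) x) ->
  (forall x y, Sset I J g x -> in_interval (a x) (b x) y -> Sset I J g y) ->
  (forall x y, Sset I J g x -> in_interval (a x) (b x) y -> a y = a x /\ b y = b x) ->
  (forall x, Sset I J g x -> (d <= (nb_eq (b x) g)%:Z)%R) ->
  sdepth_ge I J d.
Proof.
move=> mI mJ gI gJ H1 H2 H3 H4.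
pose Z x := [set j : 'I_n | b x j == g j].
pose Act x := Sset I J g x /\ forall j, j \in Z x -> x j = a x j.
pose G := \sum_(j < n) g j.
have gG : forall j, g j <= G by move=> j; rewrite /G (bigD1 j) //= leq_addr.
pose V := {ffun 'I_n -> 'I_G.+1}.
pose toV (v : V) : vec n := [ffun j => nat_of_ord (v j)].
have toV_inj : injective toV.
  move=> v w /ffunP h; apply/ffunP => j; apply: val_inj.
  by have := h j; rewrite /toV !ffunE.
pose actb (v : V) : bool :=
  if excluded_middle_informative (Act (toV v)) then true else false.
have actbP : forall v, actb v -> Act (toV v).
  by move=> v; rewrite /actb; case: excluded_middle_informative.
have actbI : forall v, Act (toV v) -> actb v.
  by move=> v h; rewrite /actb; case: excluded_middle_informative.
pose A : {pred V} := actb.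
have HactT : forall t : 'I_#|A|, Act (toV (enum_val t)).
  by move=> t; apply: actbP; exact: (enum_valP t).
have Kc : forall x c, Act x -> in_cone x (Z x) c -> in_interval (a x) (b x) (pi g c).
  move=> x c [Sx hx] [xc hc]. have [hax hxb] := H1 x Sx. have xg : vle x g := Sx.1.
  split=> j; rewrite ffunE; case: (boolP (j \in Z x)) => jZ.
  - rewrite leq_min; apply/andP; split; [exact: leq_trans (hax j) (xc j)
                                        | exact: leq_trans (hax j) (xg j)].
  - rewrite hc //; have -> : minn (x j) (g j) = x j by apply/minn_idPl; exact: xg j.
    exact: hax j.
  - by rewrite inE in jZ; rewrite (eqP jZ) geq_minr.
  - rewrite hc //; have -> : minn (x j) (g j) = x j by apply/minn_idPl; exact: xg j.
    exact: hxb j.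
have Kp : forall c, I c -> ~ J c -> Sset I J g (pi g c).
  move=> c Ic nJc; split; first by move=> j; rewrite ffunE geq_minr.
  split; first by apply: (proj1 (pi_iff mI gI c)).
  by move=> h; apply: nJc; apply: (proj2 (pi_iff mJ gJ c)).
exists #|A|, (fun t => toV (enum_val t)), (fun t => Z (toV (enum_val t))).
split; last by move=> t; exact: H4 _ (HactT t).1.
split.
- move=> t c hc. have Ax := HactT t. have hi := Kc _ _ Ax hc.
  have Sp := H2 _ _ Ax.1 hi.
  split; first by apply: (proj2 (pi_iff mI gI c)); exact: Sp.2.1.
  by move=> Jc; apply: Sp.2.2; apply: (proj1 (pi_iff mJ gJ c)).
- move=> c Ic nJc. set p := pi g c. have Sp := Kp c Ic nJc.
  have [hap hpb] := H1 p Sp.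
  pose x : vec n := [ffun j => if j \in Z p then a p j else p j].
  have xi : in_interval (a p) (b p) x.
    split=> j; rewrite /x ffunE; case: ifP => _.
    - by [].
    - exact: hap j.
    - exact: leq_trans (hap j) (hpb j).
    - exact: hpb j.
  have Sx := H2 _ _ Sp xi. have [eax ebx] := H3 _ _ Sp xi.
  have eZ : Z x = Z p by apply/setP => j; rewrite !inE ebx.
  have Ax : Act x.
    split=> // j; rewrite eZ => jZ; by rewrite eax /x ffunE jZ.
  pose v : V := [ffun j => inord (x j)].
  have xG : forall j, x j <= G := fun j => leq_trans (Sx.1 j) (gG j).
  have tv : toV v = x.
    apply/ffunP => j; have := xG j; rewrite /toV /v !ffunE => h.
    by rewrite inordK // ltnS.
  have Av : v \in A by apply: actbI; rewrite tv.
  have pcj : forall j, j \notin Z p -> c j = p j.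
    move=> j jZ.
    have bi : in_interval (a p) (b p) (b p) by split; [exact: vle_trans hap hpb|exact: vle_refl].
    have bg : b p j <= g j := (H2 _ _ Sp bi).1 j.
    have ne : ~ (b p j = g j) by apply/eqP; rewrite inE in jZ.
    have pe : p j = minn (c j) (g j) by rewrite /p ffunE.
    have := hpb j; rewrite pe => hp; lia.
  have ev : enum_val (enum_rank_in Av v) = v by rewrite enum_rankK_in.
  exists (enum_rank_in Av v); split; rewrite ?ev ?tv.
  + rewrite eZ; split=> j.
    * rewrite /x ffunE; case: ifP => jZ.
      - apply: leq_trans (hap j) _; by rewrite /p ffunE geq_minl.
      - by rewrite /p ffunE geq_minl.
    * move=> jZ; rewrite /x ffunE (negbTE jZ); exact: pcj j jZ.
  + move=> t' hc'. have Ax' := HactT t'.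
    have hi := Kc _ _ Ax' hc'.
    have [ea eb] := H3 _ _ Ax'.1 hi.
    have eZ' : Z (toV (enum_val t')) = Z p by apply/setP => j; rewrite !inE eb.
    have ex : toV (enum_val t') = x.
      apply/ffunP => j.
      have xe : x j = (if j \in Z p then a p j else p j) by rewrite /x ffunE.
      rewrite xe. case: (boolP (j \in Z p)) => jZ.
      - rewrite ea; apply: Ax'.2; by rewrite eZ'.
      - rewrite -(pcj j jZ); symmetry; apply: hc'.2; by rewrite eZ'.
    apply: enum_val_inj; rewrite ev; apply: toV_inj; by rewrite tv.
Qed.

Definition chspec n n' (phi : vec n -> vec n') (l : int) (g : vec n) (g' a' b' : vec n')
  (p : {K : nat & ('I_K -> vec n) * ('I_K -> vec n)}%type) : Prop :=
  (forall i, vle ((projT2 p).1 i) ((projT2 p).2 i)) /\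
  (forall i j c, in_interval ((projT2 p).1 i) ((projT2 p).2 i) c ->
     in_interval ((projT2 p).1 j) ((projT2 p).2 j) c -> i = j) /\
  (forall c, (in_interval a' b' (phi c) /\ vle c g) <->
     exists i, in_interval ((projT2 p).1 i) ((projT2 p).2 i) c) /\
  (forall i, ((nb_eq ((projT2 p).2 i) g)%:Z >= (nb_eq b' g')%:Z + l)%R).

Theorem proposition3p3 (n n' : nat) (phi : vec n -> vec n')
  (I' J' : vec n' -> Prop) (g : vec n) (g' : vec n') (l : int) :
  monomial_ideal I' -> monomial_ideal J' ->
  (forall a, J' a -> I' a) -> (exists a, I' a /\ ~ J' a) ->
  monotonic phi ->
  (forall a, min_gen (preimage_ideal phi I') a -> vle a g) ->
  (forall a, min_gen (preimage_ideal phi J') a -> vle a g) ->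
  (forall a, min_gen I' a -> vle a g') ->
  (forall a, min_gen J' a -> vle a g') ->
  changes_sdepth phi l g g' ->
  (monomial_ideal (preimage_ideal phi I') /\ monomial_ideal (preimage_ideal phi J')) /\
  (forall d : int, sdepth_ge I' J' d ->
     sdepth_ge (preimage_ideal phi I') (preimage_ideal phi J') (d + l)%R).
Proof.
move=> mI' mJ' JI' _ mono gI gJ gI' gJ' [Hpg Hch].
have mpre : forall K', monomial_ideal K' -> monomial_ideal (preimage_ideal phi K').
  move=> K' mK a b Ka ab; exact: mK _ _ Ka (mono _ _ ab).
split; first by split; apply: mpre.
move=> d [k [m' [Z' [[Hc Hu] Hd]]]].
pose b' (t : 'I_k) : vec n' := [ffun j => if j \in Z' t then g' j else m' t j].
pose FT := {K : nat & ('I_K -> vec n) * ('I_K -> vec n)}%type.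
have Hex : forall t : 'I_k, exists p : FT,
    vle (m' t) g' -> chspec phi l g g' (m' t) (b' t) p.
  move=> t; case: (classic (vle (m' t) g')) => hm.
  - have hb : forall c, in_interval (m' t) (b' t) c -> vle c g'.
      move=> c [_ hcb] j; apply: leq_trans (hcb j) _; rewrite ffunE.
      by case: ifP => // _; exact: hm j.
    have [K [A [B HH]]] := Hch _ _ hb.
    by exists (existT _ K (A, B)).
  - by exists (existT _ 0 (fun _ => [ffun=> 0%N], fun _ => [ffun=> 0%N])).
pose Fam t := proj1_sig (constructive_indefinite_description _ (Hex t)).
have FamP : forall t, vle (m' t) g' -> chspec phi l g g' (m' t) (b' t) (Fam t) :=
  fun t => proj2_sig (constructive_indefinite_description _ (Hex t)).
pose As t := (projT2 (Fam t)).1.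
pose Bs t := (projT2 (Fam t)).2.
have phig : forall x, vle x g -> vle (phi x) g' := fun x hx => vle_trans (mono _ _ hx) Hpg.
have cone_int : forall t c, in_interval (m' t) (b' t) c -> in_cone (m' t) (Z' t) c.
  move=> t c [h1 h2]; split => // j jZ; apply/eqP; rewrite eqn_leq (h1 j) andbT.
  by have := h2 j; rewrite ffunE (negbTE jZ).
have int_cone : forall t c, in_cone (m' t) (Z' t) c -> vle c g' ->
    in_interval (m' t) (b' t) c.
  move=> t c [h1 h2] hc; split => // j; rewrite ffunE; case: ifP => jZ.
  - exact: hc j.
  - by rewrite h2 // jZ.
pose S := Sset (preimage_ideal phi I') (preimage_ideal phi J') g.
have Hab : forall x, exists ab : vec n * vec n, S x ->
    exists t (i : 'I_(projT1 (Fam t))), in_cone (m' t) (Z' t) (phi x) /\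
      ab = (As t i, Bs t i) /\ in_interval (As t i) (Bs t i) x.
  move=> x; case: (classic (S x)) => Sx; last by exists (x, x).
  have [xg [Ix nJx]] := Sx.
  have [t [ct _]] := Hu (phi x) Ix nJx.
  have hm : vle (m' t) g' := vle_trans ct.1 (phig _ xg).
  have [_ [_ [hiff _]]] := FamP t hm.
  have [i hi] := (hiff x).1 (conj (int_cone _ _ ct (phig _ xg)) xg).
  by exists (As t i, Bs t i) => _; exists t, i.
pose ab x := proj1_sig (constructive_indefinite_description _ (Hab x)).
have abP : forall x, S x -> exists t (i : 'I_(projT1 (Fam t))),
    in_cone (m' t) (Z' t) (phi x) /\ ab x = (As t i, Bs t i) /\
    in_interval (As t i) (Bs t i) x :=
  fun x => proj2_sig (constructive_indefinite_description _ (Hab x)).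
pose a x := (ab x).1.
pose b x := (ab x).2.
have key : forall x y, S x -> in_interval (a x) (b x) y -> S y /\
    exists t (i : 'I_(projT1 (Fam t))), in_cone (m' t) (Z' t) (phi x) /\
      in_cone (m' t) (Z' t) (phi y) /\ a x = As t i /\ b x = Bs t i.
  move=> x y Sx hy. have [t [i [ct [e hi]]]] := abP x Sx.
  rewrite /a /b e /= in hy.
  have hm : vle (m' t) g' := vle_trans ct.1 (phig _ Sx.1).
  have [_ [_ [hiff _]]] := FamP t hm.
  have [hyi yg] := (hiff y).2 (ex_intro _ i hy).
  have cy := cone_int _ _ hyi. have [Iy nJy] := Hc _ _ cy.
  split; first by split.
  by exists t, i; rewrite /a /b e.
apply: (@sdepth_from_intervals n _ _ g (d + l)%R a b).
- exact: mpre.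
- exact: mpre.
- exact: gI.
- exact: gJ.
- move=> x Sx; have [t [i [_ [e hi]]]] := abP x Sx; by rewrite /a /b e.
- move=> x y Sx hy; exact: (key x y Sx hy).1.
- move=> x y Sx hy. have [Sy [t [i [ctx [cty [ea eb]]]]]] := key x y Sx hy.
  have [t' [i' [cty' [e' hi']]]] := abP y Sy.
  have ett : t' = t.
    have [t0 [_ u]] := Hu (phi y) Sy.2.1 Sy.2.2.
    by rewrite -(u t cty) (u t' cty').
  subst t'.
  have hy' : in_interval (As t i) (Bs t i) y by rewrite -ea -eb.
  have hm : vle (m' t) g' := vle_trans ctx.1 (phig _ Sx.1).
  have [_ [hdis _]] := FamP t hm.
  have ii := hdis _ _ _ hi' hy'. subst i'.
  by rewrite ea eb /a /b e'.
- move=> x Sx. have [t [i [ct [e _]]]] := abP x Sx. rewrite /b e /=.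
  have hm : vle (m' t) g' := vle_trans ct.1 (phig _ Sx.1).
  have [_ [_ [_ hdep]]] := FamP t hm.
  have h3 := hdep i. have h2 := Hd t.
  have h1 : #|Z' t| <= nb_eq (b' t) g'.
    apply: subset_leq_card; apply/subsetP => j jZ; by rewrite inE /b' ffunE jZ.
  rewrite /Bs; lia.
Qed.
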